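(* For every integer $n\ge 6$, the set $\mathcal{MUC}(n,3)$ is nonempty, and $\ell(n,3)\le \frac{7n}{3}-4$.
   Context: A bi-hypergraph $\mathcal H=(V,E)$ consists of a finite vertex set $V$ and a set $E$ of subsets of $V$, called edges, with no edge contained in another. It is $r$-uniform if every edge has exactly $r$ elements. A mapping $f:V\to\mathbb N$ is a proper coloring of $\mathcal H$ if $1<|f(e)|<|e|$ for every $e\in E$, where $f(e)=\{f(v):v\in e\}$. $\mathcal H$ is colorable if it has a proper coloring, and uncolorable otherwise. A subhypergraph of $\mathcal H$ is a bi-hypergraph $(V',E')$ with $V'\subseteq V$, $E'\subseteq E$. $\mathcal H$ is minimal uncolorable if it is uncolorable but every proper subhypergraph of it is colorable. $\mathcal{MUC}(n,r)$ is the set of minimal uncolorable $r$-uniform bi-hypergraphs with exactly $n$ vertices, and $\ell(n,r)$ is the minimum number of edges of a member of $\mathcal{MUC}(n,r)$ (and $\ell(n,r)=\infty$ if $\mathcal{MUC}(n,r)=\emptyset$). *)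

(* Defs.v *)
From mathcomp Require Import all_boot.
Set Implicit Arguments. Unset Strict Implicit. Unset Printing Implicit Defensive.

Definition is_bihypergraph (T : finType) (V : {set T}) (E : {set {set T}}) :=
  (forall e, e \in E -> e \subset V) /\
  (forall e e', e \in E -> e' \in E -> e \subset e' -> e = e').

Definition uniform (T : finType) (r : nat) (E : {set {set T}}) :=
  forall e, e \in E -> #|e| = r.

(* f : V -> N is a proper coloring: 1 < |f(e)| < |e| for every edge e,
   where |f(e)| = number of distinct values of f on e.
   (Values of f outside V are irrelevant, since edges lie inside V.) *)
Definition proper_coloring (T : finType) (E : {set {set T}}) (f : T -> nat) :=
  forall e, e \in E -> 1 < size (undup [seq f x | x <- enum e]) < #|e|.

Definition colorable (T : finType) (E : {set {set T}}) :=
  exists f : T -> nat, proper_coloring E f.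

Definition subhypergraph (T : finType) (V' : {set T}) (E' : {set {set T}})
  (V : {set T}) (E : {set {set T}}) :=
  is_bihypergraph V' E' /\ V' \subset V /\ E' \subset E.

Definition minimal_uncolorable (T : finType) (V : {set T}) (E : {set {set T}}) :=
  is_bihypergraph V E /\ ~ colorable E /\
  (forall V' E', subhypergraph V' E' V E -> (V', E') <> (V, E) -> colorable E').

Definition in_MUC (n r : nat) (E : {set {set 'I_n}}) :=
  uniform r E /\ minimal_uncolorable [set: 'I_n] E.

(* Main.v *)
Require Import Defs.
From mathcomp Require Import all_boot zify.
Set Implicit Arguments. Unset Strict Implicit. Unset Printing Implicit Defensive.

Definition good (x y z : nat) := 1 < size (undup [:: x; y; z]) < 3.
Arguments good : simpl never.
Lemma goodE x y z : good x y z = ((x == y) || (y == z) || (x == z)) && ~~ ((x == y) && (y == z)).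
Proof.
rewrite /good /= !inE.
case: (boolP (x == y)) => exy; case: (boolP (y == z)) => eyz;
 case: (boolP (x == z)) => exz; rewrite /= ?inE ?exy ?eyz ?exz //=; lia.
Qed.

Definition trip := (nat * nat * nat)%type.
Definition gt3 (s : seq nat) (t : trip) := good (nth 0 s t.1.1) (nth 0 s t.1.2) (nth 0 s t.2).
Definition goods s (l : seq trip) := all (gt3 s) l.
Definition inb k (t : trip) := [&& t.1.1 < k, t.1.2 < k & t.2 < k].
Definition pgoods s (l : seq trip) := all (fun t => inb (size s) t ==> gt3 s t) l.

Fixpoint srch (n : nat) (l F : seq trip) (k : nat) (vals : seq nat) : bool :=
  if ~~ pgoods vals l then true else
  match k with 0 => goods vals F | k'.+1 => all (fun v => srch n l F k' (rcons vals v)) (iota 0 n) end.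

Lemma gt3_cat s s' t : inb (size s) t -> gt3 (s ++ s') t = gt3 s t.
Proof. by case/and3P=> h1 h2 h3; rewrite /gt3 !nth_cat h1 h2 h3. Qed.

Lemma pgoods_cat s s' l : pgoods (s ++ s') l -> pgoods s l.
Proof.
move/allP=> H; apply/allP=> t tl; apply/implyP=> it; have := implyP (H t tl).
rewrite gt3_cat //; apply; move: it; rewrite /inb size_cat; case/and3P=> *.
apply/and3P; split; lia.
Qed.

Lemma goods_pgoods s l : goods s l -> pgoods s l.
Proof. by move/allP=> H; apply/allP=> t tl; apply/implyP=> _; apply: H. Qed.

Lemma srch_sound n l F k vals : srch n l F k vals -> forall ext, size ext = k ->
  all (fun v => v < n) ext -> pgoods (vals ++ ext) l -> goods (vals ++ ext) F.
Proof.
elim: k vals => [|k IH] vals /=.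
  move=> H [|//] _ _; rewrite cats0 => pg; by rewrite pg in H.
move=> H [//|v ext] [se] /= /andP[vn ea] pg.
have pv : pgoods vals l by apply: (pgoods_cat pg).
rewrite pv /= in H; rewrite -cat_rcons; apply: IH => //; last by rewrite cat_rcons.
by move/allP: H; apply; rewrite mem_iota.
Qed.

Lemma goods_norm s l : all (inb (size s)) l -> goods s l = goods (map (index^~ s) s) l.
Proof.
move=> al; apply: eq_in_all => t /(allP al) /and3P[h1 h2 h3].
rewrite /gt3 !(nth_map 0) //.
have key : forall i j, i < size s -> j < size s ->
   (index (nth 0 s i) s == index (nth 0 s j) s) = (nth 0 s i == nth 0 s j).
  move=> i j hi hj; apply/eqP/eqP => [E|->//]; exact: (index_inj 0 (mem_nth 0 hi) (mem_nth 0 hj) E).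
by rewrite !goodE !key.
Qed.

Lemma check_ok n l F : all (inb n) l -> all (inb n) F -> srch n l F n [::] ->
  forall s, size s = n -> goods s l -> goods s F.
Proof.
move=> al aF H s ss gs.
have ss' : size (map (index^~ s) s) = n by rewrite size_map.
rewrite goods_norm ?ss //.
have := srch_sound H ss'; rewrite /=; apply.
  apply/allP=> v /mapP[x xs ->]; by rewrite -ss index_mem.
by apply: goods_pgoods; rewrite -goods_norm ?ss.
Qed.

Definition cond (T : finType) (f : T -> nat) (e : {set T}) :=
  1 < size (undup [seq f x | x <- enum e]) < #|e|.

Lemma size_undup_eqi (s t : seq nat) : s =i t -> size (undup s) = size (undup t).
Proof.
move=> h; apply: perm_size; apply: uniq_perm; rewrite ?undup_uniq // => v.
by rewrite !mem_undup h.
Qed.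

Lemma cond_ext (T : finType) (f g : T -> nat) (e : {set T}) : f =1 g -> cond f e = cond g e.
Proof. by move=> fg; rewrite /cond (eq_map fg). Qed.

Lemma cond_imset (T T' : finType) (h : T -> T') (f : T' -> nat) (e : {set T}) :
  injective h -> cond f (h @: e) = cond (f \o h) e.
Proof.
move=> hi.
have E : [seq f x | x <- enum (h @: e)] =i [seq (f \o h) x | x <- enum e].
  move=> v; apply/mapP/mapP => [[w]|[u]].
    rewrite mem_enum => /imsetP[u ue ->] ->; exists u => //; by rewrite mem_enum.
  rewrite mem_enum => ue ->; exists (h u) => //; by rewrite mem_enum imset_f.
by rewrite /cond card_imset // (size_undup_eqi E).
Qed.

Lemma card3 (T : finType) (p q r : T) : p != q -> q != r -> p != r -> #|[set p; q; r]| = 3.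
Proof.
move=> pq qr pr; rewrite -setUA cardsU1 cards2 !inE.
by rewrite (negbTE pq) (negbTE pr) (negbTE qr).
Qed.

Lemma cond3 (T : finType) (f : T -> nat) (p q r : T) :
  p != q -> q != r -> p != r -> cond f [set p; q; r] = good (f p) (f q) (f r).
Proof.
move=> pq qr pr.
have E : [seq f x | x <- enum [set p; q; r]] =i [:: f p; f q; f r].
  move=> v; rewrite !inE; apply/mapP/idP => [[w]|].
    rewrite mem_enum !inE => H ->; move: H => /orP[/orP[]|]/eqP->; by rewrite eqxx ?orbT.
  move=> /or3P[]/eqP->; [exists p|exists q|exists r]; by rewrite // mem_enum !inE eqxx ?orbT.
by rewrite /cond card3 // /good (size_undup_eqi E).
Qed.

Definition triW (T : finType) (x0 : T) (W : seq T) (t : trip) : {set T} :=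
  [set nth x0 W t.1.1; nth x0 W t.1.2; nth x0 W t.2].
Definition valid k (t : trip) := inb k t && [&& t.1.1 != t.1.2, t.1.2 != t.2 & t.1.1 != t.2].

Lemma valid_nth (T : finType) (x0 : T) W t : uniq W -> valid (size W) t ->
  [/\ nth x0 W t.1.1 != nth x0 W t.1.2, nth x0 W t.1.2 != nth x0 W t.2 & nth x0 W t.1.1 != nth x0 W t.2].
Proof.
move=> uW /andP[/and3P[h1 h2 h3] /and3P[d1 d2 d3]].
by rewrite !nth_uniq.
Qed.

Lemma cond_triW (T : finType) (x0 : T) W (f : T -> nat) t : uniq W -> valid (size W) t ->
  cond f (triW x0 W t) = gt3 (map f W) t.
Proof.
move=> uW vt; case: (valid_nth x0 uW vt) => d1 d2 d3.
case/andP: vt => /and3P[h1 h2 h3] _.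
by rewrite /triW cond3 // /gt3 !(nth_map x0).
Qed.

Lemma card_triW (T : finType) (x0 : T) W t : uniq W -> valid (size W) t -> #|triW x0 W t| = 3.
Proof. move=> uW vt; case: (valid_nth x0 uW vt) => d1 d2 d3; exact: card3. Qed.

Definition mkEW (T : finType) (x0 : T) W (l : seq trip) : {set {set T}} :=
  [set e | e \in map (triW x0 W) l].

Lemma mkEWP (T : finType) (x0 : T) W l d :
  reflect (exists2 t, t \in l & d = triW x0 W t) (d \in mkEW x0 W l).
Proof. rewrite inE; exact: mapP. Qed.

Lemma mkEW_in (T : finType) (x0 : T) W l t : t \in l -> triW x0 W t \in mkEW x0 W l.
Proof. by move=> tl; rewrite inE; apply: map_f. Qed.

Lemma card_mkEW (T : finType) (x0 : T) W l : #|mkEW x0 W l| <= size l.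
Proof. by rewrite cardsE -(size_map (triW x0 W)) card_size. Qed.

Lemma colorable_sub (T : finType) (E1 E2 : {set {set T}}) :
  E1 \subset E2 -> colorable E2 -> colorable E1.
Proof. by move=> s [f hf]; exists f => e eE; apply: hf; exact: (subsetP s). Qed.

Definition GoodH (T : finType) (E : {set {set T}}) :=
 [/\ uniform 3 E, (forall x : T, exists2 e, e \in E & x \in e), ~ colorable E &
   forall e, e \in E -> colorable (E :\ e)].


Lemma GoodH_MUC (T : finType) (E : {set {set T}}) : GoodH E -> minimal_uncolorable [set: T] E.
Proof.
case=> un cov nc mn; split; [|split=> //].
  split=> [e _|e e' eE e'E sub]; first exact: subsetT.
  by apply/eqP; rewrite eqEcard sub un ?un.
move=> V' E' [[sV _] [_ sE]] neq.
case: (boolP (E' == E)) => [/eqP eE|nE].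
  subst E'; exfalso; apply: neq; congr (_, _); apply/setP=> v; rewrite inE.
  by case: (cov v) => e eE ve; exact: (subsetP (sV e eE)).
have : ~~ (E \subset E') by apply: contra nE => s; rewrite eqEsubset sE s.
case/subsetPn=> e eE eE'; apply: colorable_sub (mn e eE).
apply/subsetP=> d dE'; rewrite !inE (subsetP sE d dE') andbT.
by apply: contraNneq eE' => <-.
Qed.

Definition Gl : seq trip := [:: (0,1,3); (0,1,4); (0,1,5); (2,3,4); (2,3,5); (3,4,5)].

Lemma G1 s : size s = 6 -> goods s Gl -> goods s [:: (0,1,2)].
Proof. move=> ss; apply: (check_ok _ _ _ ss) => //; vm_compute; reflexivity. Qed.

Inductive patT (a b c : nat) : Prop :=
 | PM of b = a & c = a
 | PR of a != b & b != c & a != c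
 | PAB of b = a & c != a
 | PBC of c = b & a != b
 | PAC of c = a & b != a.

Lemma pat (a b c : nat) : patT a b c.
Proof.
case: (eqVneq a b) => [<-|ab]; case: (eqVneq a c) => [<-|ac].
- exact: PM.
- by apply: PAB; rewrite // eq_sym.
- by apply: PAC; rewrite // eq_sym.
- case: (eqVneq b c) => [<-|bc]; [by apply: PBC| by apply: PR].
Qed.

Lemma G2 a b c : good a b c -> exists vx vy vz, goods [:: a; b; c; vx; vy; vz] Gl.
Proof.
case: (pat a b c) => [-> ->|ab bc ac|-> ca|-> ab|-> ba]; rewrite ?goodE => g.
- lia.
- lia.
- exists c, (a + c).+1, (a + c).+1; rewrite /goods /gt3 /= !goodE; lia.
- exists a, a, b; rewrite /goods /gt3 /= !goodE; lia.
- exists a, b, b; rewrite /goods /gt3 /= !goodE; lia.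
Qed.

Ltac solve_g := rewrite /goods /gt3 /= !goodE; lia.

Lemma G3 a b c : ~~ good a b c -> forall t, t \in Gl ->
  exists vx vy vz, goods [:: a; b; c; vx; vy; vz] (filter (predC1 t) Gl).
Proof.
move=> g t; rewrite !inE; move: g; case: (pat a b c) => [-> ->|ab bc ac|-> ca|-> ab|-> ba] g;
 try by (move=> _; exfalso; move: g; rewrite goodE; lia).
- do 5 (case/orP; first by move/eqP->;
   first [ by exists a, a.+1, a.+1; solve_g | by exists a.+1, a, a.+1; solve_g
         | by exists a.+1, a.+1, a; solve_g
         | by exists a.+1, a.+2, a.+1; solve_g | by exists a.+1, a.+1, a.+2; solve_g ]).
  by move/eqP->; exists a.+1, a.+1, a.+1; solve_g.
- do 5 (case/orP; first by move/eqP->;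
   first [ by exists c, a, a; solve_g | by exists a, c, a; solve_g | by exists a, a, c; solve_g
         | by exists a, b, a; solve_g | by exists a, a, b; solve_g ]).
  by move/eqP->; exists a, a, a; solve_g.
Qed.

Definition extc (T T' : finType) (h : T -> T') (x y z : T') (g : T -> nat)
  (w : nat * nat * nat) (v : T') : nat :=
  if v == x then w.1.1 else if v == y then w.1.2 else if v == z then w.2 else
  if [pick u | h u == v] is Some u then g u else 0.

Lemma colorableI (T : finType) (E : {set {set T}}) (f : T -> nat) :
  (forall e, e \in E -> cond f e) -> colorable E.
Proof. by move=> H; exists f. Qed.

Lemma step (T T' : finType) (h : T -> T') (x y z : T') (E : {set {set T}}) (a b c : T) :
  injective h -> (forall u, [&& h u != x, h u != y & h u != z]) -> [&& x != y, y != z & x != z] ->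
  (forall v, [|| v == x, v == y | v == z] \/ exists u, v = h u) ->
  a != b -> b != c -> a != c -> [set a; b; c] \in E -> GoodH E ->
  GoodH ([set h @: e | e : {set T} in E :\ [set a; b; c]] :|: mkEW x [:: h a; h b; h c; x; y; z] Gl).
Proof.
move=> hi hn /and3P[xy yz xz] hcov ab bc ac e0E [un cov nc mn].
set e0 := [set a; b; c].
set W := [:: h a; h b; h c; x; y; z].
set E1 := [set h @: e | e : {set T} in E :\ e0].
set E2 := mkEW x W Gl.
have hx u : (h u == x) = false by case/and3P: (hn u) => /negbTE.
have hy u : (h u == y) = false by case/and3P: (hn u) => _ /negbTE.
have hz u : (h u == z) = false by case/and3P: (hn u) => _ _ /negbTE.
have uW : uniq W.
  rewrite /W /= !inE !(inj_eq hi) !hx !hy !hz (negbTE ab) (negbTE bc) (negbTE ac).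
  by rewrite (negbTE xy) (negbTE yz) (negbTE xz).
have vG : all (valid (size W)) Gl by [].
have condE2 f t : t \in Gl -> cond f (triW x W t) = gt3 (map f W) t.
  by move=> tl; apply: cond_triW => //; exact: (allP vG t tl).
have extc_h g w u : extc h x y z g w (h u) = g u.
  rewrite /extc hx hy hz; case: pickP => [u' /eqP /hi -> //|/(_ u)].
  by rewrite eqxx.
have mapW g w : map (extc h x y z g w) W = [:: g a; g b; g c; w.1.1; w.1.2; w.2].
  rewrite /W /= !extc_h /extc eqxx (eq_sym y) (negbTE xy) eqxx.
  by rewrite (eq_sym z) (negbTE xz) (eq_sym z) (negbTE yz) eqxx.
have E2in t : t \in Gl -> triW x W t \in E1 :|: E2.
  by move=> tl; rewrite inE /E2 mkEW_in ?orbT.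
have notE1 t : t \in Gl -> triW x W t \notin E1.
  move=> tl; have : t.2 \in [:: 3; 4; 5] by move: t tl; apply/allP.
  move=> t2; apply/negP => /imsetP[e _ eq].
  have : nth x W t.2 \in triW x W t by rewrite /triW !inE eqxx ?orbT.
  rewrite eq => /imsetP[u _ eu].
  by move: t2 eu; rewrite !inE => /orP[/eqP->|/orP[]/eqP->] /= /eqP;
    rewrite eq_sym ?hx ?hy ?hz.
split.
- move=> d; rewrite inE => /orP[/imsetP[e eE ->]|/mkEWP[t tl ->]].
    by rewrite card_imset //; apply: un; move: eE; rewrite inE => /andP[].
  by apply: card_triW => //; exact: (allP vG t tl).
- move=> v; case: (hcov v) => [|[u ->]].
    case/or3P=> /eqP->; [exists (triW x W (0,1,3))|exists (triW x W (0,1,4))|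
      exists (triW x W (0,1,5))]; rewrite ?E2in // /triW /= !inE eqxx ?orbT //.
  case: (cov u) => e eE ue; case: (eqVneq e e0) => [ee|ne].
    move: ue; rewrite ee !inE => /orP[/orP[]|]/eqP->;
     [exists (triW x W (0,1,3))|exists (triW x W (0,1,3))|exists (triW x W (2,3,4))];
     rewrite ?E2in // /triW /= !inE eqxx ?orbT //.
  exists (h @: e); last exact: imset_f.
  by rewrite inE; apply/orP; left; apply: imset_f; rewrite !inE ne eE.
- move=> [f pf]; apply: nc; apply: (@colorableI _ _ (f \o h)) => e eE.
  case: (eqVneq e e0) => [->|ne].
    rewrite cond3 //.
    have gs : goods (map f W) Gl.
      by apply/allP => t tl; rewrite -condE2 //; apply: pf; exact: E2in.
    by have := G1 (size_map f W) gs; rewrite /goods /gt3 /= andbT.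
  rewrite -cond_imset //; apply: pf; rewrite inE; apply/orP; left.
  by apply: imset_f; rewrite !inE ne eE.
- move=> d; rewrite inE => /orP[/imsetP[e eE ->]|/mkEWP[t tl ->]].
  + move: eE; rewrite !inE => /andP[eE0 eE'].
    case: (mn e eE') => g pg.
    have ge0 : good (g a) (g b) (g c).
      by rewrite -cond3 //; apply: pg; rewrite !inE eq_sym eE0 e0E.
    case: (G2 ge0) => vx [vy [vz gw]].
    apply: (@colorableI _ _ (extc h x y z g (vx, vy, vz))) => dd; rewrite in_setD1 in_setU => /andP[nd].
    case/orP => [/imsetP[e'' e''E dde]|/mkEWP[t tl dde]]; subst dd.
      rewrite cond_imset // (@cond_ext _ _ g); last by move=> u /=; rewrite extc_h.
      apply: pg; rewrite in_setD1; move: e''E; rewrite in_setD1 => /andP[_ ->].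
      rewrite andbT.
      by apply: contraNneq nd => ->.
    by rewrite condE2 // mapW; exact: (allP gw).
  + case: (mn e0 e0E) => g pg.
    have ng : ~~ good (g a) (g b) (g c).
      apply/negP => gg; apply: nc; apply: (@colorableI _ _ g) => e eE.
      case: (eqVneq e e0) => [->|ne]; first by rewrite cond3.
      by apply: pg; rewrite !inE ne.
    case: (G3 ng tl) => vx [vy [vz gw]].
    apply: (@colorableI _ _ (extc h x y z g (vx, vy, vz))) => dd; rewrite in_setD1 in_setU => /andP[nd].
    case/orP => [/imsetP[e'' e''E dde]|/mkEWP[t' tl' dde]]; subst dd.
      rewrite cond_imset // (@cond_ext _ _ g); last by move=> u /=; rewrite extc_h.
      exact: pg.
    rewrite condE2 // mapW; apply: (allP gw); rewrite mem_filter tl' andbT /=.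
    by apply: contraNneq nd => ->.
Qed.

Lemma gt3_ext s s' t k : inb k t -> (forall i, i < k -> nth 0 s i = nth 0 s' i) ->
  gt3 s t = gt3 s' t.
Proof. by case/and3P=> h1 h2 h3 H; rewrite /gt3 !H. Qed.

Lemma base_good (T : finType) (x0 : T) (W : seq T) (l : seq trip) (cols : seq (seq nat)) :
  uniq W -> (forall v, v \in W) -> 0 < size W -> all (valid (size W)) l ->
  all (fun i => has (fun t => i \in [:: t.1.1; t.1.2; t.2]) l) (iota 0 (size W)) ->
  srch (size W) l [:: (0,0,0)] (size W) [::] ->
  all (fun t => goods (nth [::] cols (index t l)) (filter (predC1 t) l)) l ->
  GoodH (mkEW x0 W l).
Proof.
move=> uW allW sW vl covc sc colc.
have condl f t : t \in l -> cond f (triW x0 W t) = gt3 (map f W) t.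
  by move=> tl; apply: cond_triW => //; exact: (allP vl t tl).
split.
- by move=> d /mkEWP[t tl ->]; apply: card_triW => //; exact: (allP vl t tl).
- move=> v; have vi : v = nth x0 W (index v W) by rewrite nth_index.
  have iv : index v W \in iota 0 (size W) by rewrite mem_iota /= index_mem.
  case/hasP: (allP covc _ iv) => t tl it.
  exists (triW x0 W t); first exact: mkEW_in.
  rewrite vi; move: it; rewrite /= !in_cons in_nil orbF => /or3P[]/eqP->; by rewrite /triW !inE eqxx ?orbT.
- move=> [f pf].
  have gs : goods (map f W) l.
    by apply/allP => t tl; rewrite -condl //; apply: pf; exact: mkEW_in.
  have il : all (inb (size W)) l by apply/allP => t /(allP vl) /andP[].
  have := check_ok il _ sc (size_map f W) gs.
  by rewrite /= /inb sW /goods /gt3 /= goodE eqxx => /(_ isT).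
- move=> d /mkEWP[t tl dt]; subst d.
  set c := nth [::] cols (index t l).
  apply: (@colorableI _ _ (fun v => nth 0 c (index v W))) => dd.
  rewrite in_setD1 => /andP[nd /mkEWP[t' tl' dde]]; subst dd.
  rewrite condl //.
  rewrite (@gt3_ext _ c _ (size W)); first last.
    by move=> i ilt; rewrite (nth_map x0) // index_uniq.
    by case/andP: (allP vl t' tl').
  apply: (allP (allP colc t tl)); rewrite mem_filter tl' andbT /=.
  by apply: contraNneq nd => ->.
Qed.

Lemma card_base (T : finType) (x0 : T) W l : #|mkEW x0 W l| <= size l.
Proof. exact: card_mkEW. Qed.

Lemma step_card (T T' : finType) (h : T -> T') (x : T') W (E : {set {set T}}) e0 :
  e0 \in E -> #|[set h @: e | e : {set T} in E :\ e0] :|: mkEW x W Gl| <= #|E| + 5.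
Proof.
move=> e0E.
have c1 := leq_imset_card (fun e : {set T} => h @: e) (E :\ e0).
have c2 := card_mkEW x W Gl.
have c3 := cardsD1 e0 E; rewrite e0E in c3.
rewrite cardsU; apply: leq_trans (leq_subr _ _) _; rewrite c3.
apply: leq_trans (leq_add c1 c2) _.
by rewrite /= add1n addSn addnS.
Qed.

Definition Pn n := exists E : {set {set 'I_n}},
  [/\ GoodH E, 3 * #|E| <= 7 * n - 12 &
      exists a b c : 'I_n, [/\ a != b, b != c, a != c & [set a; b; c] \in E]].

Lemma step_n n : 6 <= n -> Pn n -> Pn n.+3.
Proof.
move=> n6 [E [gE cE [a [b [c [ab bc ac e0E]]]]]].
have le : n <= n.+3 by lia.
pose h := widen_ord le.
pose x : 'I_n.+3 := inord n. pose y : 'I_n.+3 := inord n.+1. pose z : 'I_n.+3 := inord n.+2.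
have hi : injective h by move=> u v /(congr1 val) /= /val_inj.
have vx : nat_of_ord x = n by rewrite /x inordK //; lia.
have vy : nat_of_ord y = n.+1 by rewrite /y inordK //; lia.
have vz : nat_of_ord z = n.+2 by rewrite /z inordK //; lia.
have hn : forall u, [&& h u != x, h u != y & h u != z].
  move=> u; have := ltn_ord u.
  by rewrite -!val_eqE /= vx vy vz; lia.
have dxyz : [&& x != y, y != z & x != z] by rewrite -!val_eqE /= vx vy vz; lia.
have hcov : forall v, [|| v == x, v == y | v == z] \/ exists u, v = h u.
  move=> v; case: (ltnP v n) => vn.
    by right; exists (Ordinal vn); apply: val_inj.
  left; have := ltn_ord v; rewrite -!val_eqE /= vx vy vz; lia.
exists ([set h @: e | e : {set 'I_n} in E :\ [set a; b; c]] :|: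
        mkEW x [:: h a; h b; h c; x; y; z] Gl).
split.
- exact: step.
- apply: (@leq_trans (3 * (#|E| + 5))); last by lia.
  by rewrite leq_mul2l (step_card h x [:: h a; h b; h c; x; y; z] e0E) orbT.
- exists (h a), (h b), x; split.
  + by rewrite (inj_eq hi).
  + by case/and3P: (hn b).
  + by case/and3P: (hn a).
  + rewrite inE; apply/orP; right.
    exact: (@mkEW_in _ x [:: h a; h b; h c; x; y; z] Gl (0,1,3) isT).
Qed.

Definition l6 : seq trip := [:: (0,1,2); (0,1,3); (0,1,4); (0,2,3); (0,2,5); (0,4,5); (1,2,4); (1,2,5); (1,3,5); (2,3,4)].
Definition c6 : seq (seq nat) := [:: [:: 0; 0; 0; 1; 1; 1]; [:: 0; 0; 1; 0; 1; 1]; [:: 0; 0; 1; 1; 0; 1]; [:: 0; 0; 1; 2; 1; 0]; [:: 0; 1; 0; 1; 1; 0]; [:: 0; 1; 1; 0; 0; 0]; [:: 0; 0; 1; 1; 2; 0]; [:: 0; 1; 0; 1; 0; 2]; [:: 0; 1; 0; 1; 0; 1]; [:: 0; 0; 1; 1; 1; 0]].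
Definition l7 : seq trip := [:: (0,1,4); (0,2,5); (0,3,6); (1,2,3); (1,2,6); (1,3,6); (1,4,5); (2,3,4); (2,3,6); (2,4,5); (2,4,6); (4,5,6)].
Definition c7 : seq (seq nat) := [:: [:: 0; 0; 0; 1; 0; 1; 1]; [:: 0; 0; 0; 1; 1; 0; 1]; [:: 0; 1; 1; 0; 0; 1; 0]; [:: 0; 1; 1; 1; 0; 1; 0]; [:: 0; 0; 0; 1; 1; 1; 0]; [:: 0; 1; 0; 1; 0; 1; 1]; [:: 0; 1; 0; 1; 1; 1; 0]; [:: 0; 0; 1; 1; 1; 0; 0]; [:: 0; 1; 2; 2; 0; 0; 2]; [:: 0; 1; 0; 0; 1; 2; 1]; [:: 0; 0; 1; 0; 1; 0; 1]; [:: 0; 0; 0; 1; 1; 1; 1]].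
Definition l8 : seq trip := [:: (0,1,2); (0,1,7); (0,2,4); (0,2,5); (0,3,7); (1,2,5); (1,3,4); (2,3,7); (2,5,6); (2,6,7); (3,5,6); (4,5,6); (4,5,7)].
Definition c8 : seq (seq nat) := [:: [:: 0; 0; 0; 0; 1; 1; 0; 2]; [:: 0; 0; 1; 1; 0; 1; 0; 0]; [:: 0; 0; 1; 2; 2; 1; 2; 2]; [:: 0; 1; 0; 0; 1; 0; 1; 1]; [:: 0; 0; 1; 1; 0; 0; 1; 2]; [:: 0; 1; 1; 0; 0; 1; 0; 1]; [:: 0; 0; 1; 0; 0; 1; 0; 1]; [:: 0; 0; 1; 1; 0; 1; 0; 1]; [:: 0; 0; 1; 2; 0; 0; 2; 2]; [:: 0; 0; 1; 0; 1; 0; 1; 1]; [:: 0; 0; 1; 0; 1; 0; 0; 1]; [:: 0; 1; 0; 1; 2; 1; 0; 1]; [:: 0; 0; 1; 0; 1; 1; 0; 1]].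

Lemma base_n n (l : seq trip) (cols : seq (seq nat)) :
  all (valid n.+1) l ->
  all (fun i => has (fun t => i \in [:: t.1.1; t.1.2; t.2]) l) (iota 0 n.+1) ->
  srch n.+1 l [:: (0,0,0)] n.+1 [::] ->
  all (fun t => goods (nth [::] cols (index t l)) (filter (predC1 t) l)) l ->
  3 * size l <= 7 * n.+1 - 12 ->
  (if l is t :: _ then valid n.+1 t else false) ->
  Pn n.+1.
Proof.
move=> vl cv sc cc sz hd.
have sW : size (enum 'I_n.+1) = n.+1 by rewrite size_enum_ord.
exists (mkEW ord0 (enum 'I_n.+1) l); split.
- apply: (@base_good _ ord0 (enum 'I_n.+1) l cols); rewrite ?sW //; try exact: enum_uniq.
  by move=> v; rewrite mem_enum.
- by apply: (leq_trans _ sz); rewrite leq_mul2l card_mkEW orbT.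
- case: l vl cv sc cc sz hd => [//|t l] vl _ _ _ _ vt.
  have vt' : valid (size (enum 'I_n.+1)) t by rewrite sW.
  case: (valid_nth ord0 (enum_uniq _) vt') => d1 d2 d3.
  exists (nth ord0 (enum 'I_n.+1) t.1.1), (nth ord0 (enum 'I_n.+1) t.1.2),
         (nth ord0 (enum 'I_n.+1) t.2); split => //.
  by apply: mkEW_in; rewrite inE eqxx.
Qed.

Lemma P6 : Pn 6. Proof. apply: (@base_n 5 l6 c6); vm_compute; reflexivity. Qed.
Lemma P7 : Pn 7. Proof. apply: (@base_n 6 l7 c7); vm_compute; reflexivity. Qed.
Lemma P8 : Pn 8. Proof. apply: (@base_n 7 l8 c8); vm_compute; reflexivity. Qed.

Lemma mainP k : Pn (6 + k) /\ Pn (7 + k) /\ Pn (8 + k).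
Proof.
elim: k => [|k [h6 [h7 h8]]]; first by split; [exact: P6|split; [exact: P7|exact: P8]].
split; first exact: h7.
split; first exact: h8.
exact: (step_n (leq_addr k 6) h6).
Qed.

Unset Implicit Arguments.
Theorem theorem1p3 (n : nat) (hn : 6 <= n) :
  (exists E : {set {set 'I_n}}, in_MUC 3 E) /\
  (exists E : {set {set 'I_n}}, in_MUC 3 E /\ 3 * #|E| <= 7 * n - 12).
Proof.
have [k ->] : exists k, n = 6 + k by exists (n - 6); lia.
case: (mainP k) => [[E [gE cE _]] _].
have mE : in_MUC 3 E by split; [case: gE | exact: GoodH_MUC].
by split; exists E.
Qed.
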